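(* Let $K\ge 1$, $a\in\mathbb{R}$, and $\sigma=\tanh$ applied element-wise. For parameters $\bm c,\bm w,\bm b,\bm c_p\in\mathbb{R}^K$ define, for $x\in[0,2\pi]$, $$\hat u(x)=\bm c^\top\sigma(\bm w x+\bm b)=\sum_{k=1}^K c_k\tanh(w_kx+b_k),\qquad \hat p(x)=\bm c_p^\top\sigma(\bm w x+\bm b)=\sum_{k=1}^K c_{p,k}\tanh(w_kx+b_k),$$ and the loss functionals $$\mathcal L_{\mathcal F}(\bm c,\bm w,\bm b)=\frac1{2\pi}\int_0^{2\pi}\Big(\hat u''(x)+a^2\sin(ax)\Big)^2\,dx,$$ $$\tilde{\mathcal L}_{\mathcal F}(\bm c,\bm w,\bm b,\bm c_p)=\frac1{2\pi}\int_0^{2\pi}\Big[\big(\hat p'(x)+a^2\sin(ax)\big)^2+\big(\hat p(x)-\hat u'(x)\big)^2\Big]\,dx .$$ Set $S=\sum_{l=1}^K|c_l|w_l^2+a^2$ and $T=\|\bm c_p\|_1+\sum_{l=1}^K\max(|c_l|,|c_{p,l}|)\,|w_l|+a^2$. Then there is an absolute constant $C>0$ (independent of $K$, $a$ and all parameters) such that for all parameter values and every $k=1,\dots,K$: $$\Big|\frac{\partial\mathcal L_{\mathcal F}}{\partial c_k}\Big|\le C\,S\,w_k^2,\quad \Big|\frac{\partial\mathcal L_{\mathcal F}}{\partial w_k}\Big|\le C\,S\,|c_k|\,|w_k|\,(|w_k|+1),\quad \Big|\frac{\partial\mathcal L_{\mathcal F}}{\partial b_k}\Big|\le C\,S\,|c_k|\,w_k^2,$$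 and $$\Big|\frac{\partial\tilde{\mathcal L}_{\mathcal F}}{\partial c_k}\Big|\le C\,T\,|w_k|,\quad \Big|\frac{\partial\tilde{\mathcal L}_{\mathcal F}}{\partial w_k}\Big|\le C\,T\,\max(|c_k|,|c_{p,k}|)\max(|w_k|,1),$$ $$\Big|\frac{\partial\tilde{\mathcal L}_{\mathcal F}}{\partial b_k}\Big|\le C\,T\,\max(|c_k|,|c_{p,k}|)\max(|w_k|,1),\quad \Big|\frac{\partial\tilde{\mathcal L}_{\mathcal F}}{\partial c_{p,k}}\Big|\le C\,T\,\max(|w_k|,1).$$
   Context: $\hat u'$, $\hat u''$, $\hat p'$ denote derivatives with respect to $x$. $\mathcal L_{\mathcal F}$ is the (continuous) PDE residual loss for the 1D Poisson equation $u''=-a^2\sin(ax)$ on $(0,2\pi)$, and $\tilde{\mathcal L}_{\mathcal F}$ is the PDE residual loss for the reformulated system $p'=-a^2\sin(ax)$, $p=u'$ (the ''extra field'' $p$). $\|\cdot\|_1$ is the $\ell^1$ norm on $\mathbb{R}^K$. *)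

(* Defs.v *)
From Stdlib Require Import Reals Lra List.
From Coquelicot Require Import Coquelicot.
Open Scope R_scope.

(* Parameter vectors in R^K are represented as functions nat -> R, with
   entries indexed by 0..K-1 (paper's index k corresponds to k-1). *)
Definition vsum (K : nat) (f : nat -> R) : R :=
  fold_right Rplus 0 (map f (seq 0 K)).

Definition upd (v : nat -> R) (k : nat) (t : R) : nat -> R :=
  fun j => if Nat.eqb j k then t else v j.

Definition uhat (K : nat) (c w b : nat -> R) (x : R) : R :=
  vsum K (fun k => c k * tanh (w k * x + b k)).

Definition LF (K : nat) (a : R) (c w b : nat -> R) : R :=
  / (2 * PI) * RInt (fun x => (Derive_n (uhat K c w b) 2 x + a ^ 2 * sin (a * x)) ^ 2)
                    0 (2 * PI).

Definition LFt (K : nat) (a : R) (c w b cp : nat -> R) : R :=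
  / (2 * PI) * RInt (fun x =>
       (Derive (uhat K cp w b) x + a ^ 2 * sin (a * x)) ^ 2
     + (uhat K cp w b x - Derive (uhat K c w b) x) ^ 2)
     0 (2 * PI).

Definition Sconst (K : nat) (a : R) (c w : nat -> R) : R :=
  vsum K (fun l => Rabs (c l) * w l ^ 2) + a ^ 2.

Definition Tconst (K : nat) (a : R) (c w cp : nat -> R) : R :=
  vsum K (fun l => Rabs (cp l))
  + vsum K (fun l => Rmax (Rabs (c l)) (Rabs (cp l)) * Rabs (w l)) + a ^ 2.

Definition dbound (F : R -> R) (t0 B : R) : Prop :=
  ex_derive F t0 /\ Rabs (Derive F t0) <= B.

(* Main.v *)
Require Import Defs.
From Stdlib Require Import Reals Lra Lia List FunctionalExtensionality.
From Coquelicot Require Import Coquelicot.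
Open Scope R_scope.

Lemma cosh_pos x : 0 < cosh x.
Proof. unfold cosh. pose proof (exp_pos x); pose proof (exp_pos (-x)); lra. Qed.

Lemma tanh_bound x : Rabs (tanh x) <= 1.
Proof.
  unfold tanh. pose proof (cosh_pos x) as Hc.
  assert (Hs : Rabs (sinh x) <= cosh x).
  { unfold sinh, cosh. pose proof (exp_pos x); pose proof (exp_pos (-x)).
    apply Rabs_le; lra. }
  rewrite Rabs_div by lra. rewrite (Rabs_right (cosh x)) by lra.
  apply Rmult_le_reg_r with (cosh x); auto. field_simplify; lra.
Qed.

Lemma is_derive_tanh x : is_derive tanh x (1 - tanh x ^ 2).
Proof.
  pose proof (cosh_pos x) as Hc.
  assert (H1 : is_derive sinh x (cosh x)) by (apply is_derive_Reals, derivable_pt_lim_sinh).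
  assert (H2 : is_derive cosh x (sinh x)) by (apply is_derive_Reals, derivable_pt_lim_cosh).
  unfold tanh.
  eapply is_derive_ext. { intro t. reflexivity. }
  replace (1 - (sinh x / cosh x) ^ 2) with ((cosh x * cosh x - sinh x * sinh x) / (cosh x ^ 2)).
  2:{ field. lra. }
  apply (is_derive_div sinh cosh x (cosh x) (sinh x) H1 H2). lra.
Qed.

Lemma c2d_snd f t x : continuity_2d_pt f t x -> continuous (f t) x.
Proof.
  intros H. apply continuity_pt_filterlim.
  unfold continuity_pt, continue_in, limit1_in, limit_in.
  intros eps Heps. unfold continuity_2d_pt in H.
  destruct (H (mkposreal eps Heps)) as [d Hd].
  exists d. split; [apply cond_pos|]. intros y [_ Hy]. simpl in *. unfold R_dist in *.
  apply (Hd t y). rewrite Rminus_eq_0, Rabs_R0. apply cond_pos.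
  exact Hy.
Qed.
Lemma main_param (f df : R -> R -> R) (t0 B : R) :
 (forall t x, is_derive (fun s => f s x) t (df t x)) ->
 (forall t x, continuity_2d_pt df t x) ->
 (forall t x, continuity_2d_pt f t x) ->
 (forall x, 0 <= x <= 2*PI -> Rabs (df t0 x) <= B) ->
 dbound (fun t => /(2*PI) * RInt (f t) 0 (2*PI)) t0 B.
Proof.
  intros Hd Hdc Hc HB.
  change (dbound (fun t => /(2*PI) * RInt (fun x => f t x) 0 (2*PI)) t0 B).
  pose proof PI_RGT_0 as Hpi.
  assert (HI : is_derive (fun t => RInt (fun x => f t x) 0 (2*PI)) t0
                 (RInt (fun x => Derive (fun u => f u x) t0) 0 (2*PI))).
  { apply is_derive_RInt_param.
    - apply filter_forall. intros y x _. eexists. apply Hd.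
    - intros x _. eapply continuity_2d_pt_ext; [|apply (Hdc t0 x)].
      intros u v. symmetry. apply is_derive_unique, Hd.
    - apply filter_forall. intros y. apply (@ex_RInt_continuous R_CompleteNormedModule).
      intros z _. apply c2d_snd, Hc. }
  assert (Heq : RInt (fun x => Derive (fun u => f u x) t0) 0 (2*PI) = RInt (df t0) 0 (2*PI)).
  { apply RInt_ext. intros x _. apply is_derive_unique, Hd. }
  rewrite Heq in HI.
  apply (is_derive_scal _ _ (/(2*PI))) in HI.
  split.
  - eexists. exact HI.
  - rewrite (is_derive_unique _ _ _ HI).
    rewrite Rabs_mult, Rabs_right by (apply Rle_ge, Rlt_le, Rinv_0_lt_compat; lra).
    assert (H2 : Rabs (RInt (df t0) 0 (2*PI)) <= (2*PI - 0) * B).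
    { apply abs_RInt_le_const. lra.
      apply (@ex_RInt_continuous R_CompleteNormedModule). intros z _. apply c2d_snd, Hdc.
      exact HB. }
    apply Rle_trans with (/(2*PI) * ((2*PI - 0) * B)).
    + apply Rmult_le_compat_l; [apply Rlt_le, Rinv_0_lt_compat; lra| exact H2].
    + right. field. lra.
Qed.
Definition lsum (L : list nat) (f : nat -> R) := fold_right Rplus 0 (map f L).

Lemma vsum_lsum K f : vsum K f = lsum (seq 0 K) f.
Proof. reflexivity. Qed.

Lemma is_derive_vsum K (F : nat -> R -> R) (dF : nat -> R) x :
  (forall l, is_derive (F l) x (dF l)) ->
  is_derive (fun y => vsum K (fun l => F l y)) x (vsum K dF).
Proof.
  intros H. unfold vsum. induction (seq 0 K) as [|l L IH]; simpl.
  - apply is_derive_Reals, derivable_pt_lim_const.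
  - apply (is_derive_plus (F l) (fun y => fold_right Rplus 0 (map (fun l0 => F l0 y) L))); auto.
Qed.

Lemma c2d_vsum K (F : nat -> R -> R -> R) t x :
  (forall l, continuity_2d_pt (F l) t x) ->
  continuity_2d_pt (fun u v => vsum K (fun l => F l u v)) t x.
Proof.
  intros H. unfold vsum. induction (seq 0 K) as [|l L IH]; simpl.
  - apply continuity_2d_pt_const.
  - apply (continuity_2d_pt_plus (F l) (fun u v => fold_right Rplus 0 (map (fun l0 => F l0 u v) L))); auto.
Qed.

Lemma vsum_abs_le K f g : (forall l, Rabs (f l) <= g l) -> Rabs (vsum K f) <= vsum K g.
Proof.
  intros H. unfold vsum. induction (seq 0 K) as [|l L IH]; simpl.
  - rewrite Rabs_R0; lra.
  - eapply Rle_trans; [apply Rabs_triang|]. specialize (H l). lra.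
Qed.

Lemma vsum_le K f g : (forall l, f l <= g l) -> vsum K f <= vsum K g.
Proof.
  intros H. unfold vsum. induction (seq 0 K) as [|l L IH]; simpl. lra.
  specialize (H l). lra.
Qed.

Lemma vsum_nonneg K f : (forall l, 0 <= f l) -> 0 <= vsum K f.
Proof.
  intros H. unfold vsum. induction (seq 0 K) as [|l L IH]; simpl. lra.
  specialize (H l). lra.
Qed.

Lemma vsum_delta K k g : (k < K)%nat -> vsum K (fun l => if Nat.eqb l k then g else 0) = g.
Proof.
  intros Hk. unfold vsum.
  assert (Hz : forall s n, (k < s)%nat -> fold_right Rplus 0 (map (fun l => if Nat.eqb l k then g else 0) (seq s n)) = 0).
  { intros s n. revert s. induction n as [|n IH]; intros s Hs; simpl. reflexivity.
    rewrite IH by lia. destruct (Nat.eqb_spec s k). lia. lra. }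
  assert (Hg : forall n s, (s <= k < s + n)%nat -> fold_right Rplus 0 (map (fun l => if Nat.eqb l k then g else 0) (seq s n)) = g).
  { induction n as [|n IH]; intros s Hs; simpl. lia.
    destruct (Nat.eqb_spec s k).
    - rewrite Hz by lia. lra.
    - rewrite IH by lia. lra. }
  apply Hg. lia.
Qed.

Lemma upd_same v k : upd v k (v k) = v.
Proof.
  apply functional_extensionality. intros j. unfold upd.
  destruct (Nat.eqb_spec j k); subst; reflexivity.
Qed.

Lemma c2d_upd v k l t x : continuity_2d_pt (fun u (_ : R) => upd v k u l) t x.
Proof.
  unfold upd. destruct (Nat.eqb l k).
  apply continuity_2d_pt_id1. apply continuity_2d_pt_const.
Qed.

Lemma c2d_tanh f t x : continuity_2d_pt f t x -> continuity_2d_pt (fun u v => tanh (f u v)) t x.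
Proof.
  intros H. apply continuity_1d_2d_pt_comp; auto.
  apply derivable_continuous_pt. exists (1 - tanh (f t x)^2). apply is_derive_Reals, is_derive_tanh.
Qed.

Lemma c2d_sin f t x : continuity_2d_pt f t x -> continuity_2d_pt (fun u v => sin (f u v)) t x.
Proof.
  intros H. apply continuity_1d_2d_pt_comp; auto. apply continuity_sin.
Qed.

Lemma c2d_pow f n t x : continuity_2d_pt f t x -> continuity_2d_pt (fun u v => f u v ^ n) t x.
Proof.
  intros H. induction n as [|n IH]; simpl.
  apply continuity_2d_pt_const.
  apply (continuity_2d_pt_mult f (fun u v => f u v ^ n)); auto.
Qed.

Ltac c2d := repeat first [ apply continuity_2d_pt_const | apply continuity_2d_pt_id1
  | apply continuity_2d_pt_id2 | apply c2d_upd | apply c2d_tanh | apply c2d_sin | apply c2d_pow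
  | apply continuity_2d_pt_plus | apply continuity_2d_pt_minus | apply continuity_2d_pt_mult
  | apply continuity_2d_pt_opp | apply c2d_tanh | apply c2d_sin | apply c2d_pow
  | (apply c2d_vsum; intro) ].


Definition s1 (y : R) := 1 - y ^ 2.
Definition s2 (y : R) := -2 * y * (1 - y ^ 2).
Definition s3 (y : R) := (-2 + 6 * y ^ 2) * (1 - y ^ 2).

Lemma Derive_tanh z : Derive (fun x => tanh x) z = 1 - tanh z ^ 2.
Proof. apply is_derive_unique, is_derive_tanh. Qed.

Ltac ad := unfold s1, s2, s3; auto_derive;
  try (solve [repeat split; eexists; apply is_derive_tanh]);
  try (rewrite ?Derive_tanh; ring).

Definition uhat1 K (c w b : nat -> R) x := vsum K (fun l => c l * w l * s1 (tanh (w l * x + b l))).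
Definition uhat2 K (c w b : nat -> R) x := vsum K (fun l => c l * w l ^ 2 * s2 (tanh (w l * x + b l))).

Lemma D_uhat K c w b x : is_derive (uhat K c w b) x (uhat1 K c w b x).
Proof.
  unfold uhat, uhat1.
  apply (is_derive_vsum K (fun l y => c l * tanh (w l * y + b l))).
  intros l. unfold s1. ad.
Qed.

Lemma D_uhat1 K c w b x : is_derive (uhat1 K c w b) x (uhat2 K c w b x).
Proof.
  unfold uhat1, uhat2.
  apply (is_derive_vsum K (fun l y => c l * w l * s1 (tanh (w l * y + b l)))).
  intros l. unfold s1, s2. ad.
Qed.

Lemma Derive_uhat K c w b : Derive (uhat K c w b) = uhat1 K c w b.
Proof. apply functional_extensionality. intros x. apply is_derive_unique, D_uhat. Qed.

Lemma LF_eq K a c w b : LF K a c w b =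
  / (2 * PI) * RInt (fun x => (uhat2 K c w b x + a ^ 2 * sin (a * x)) ^ 2) 0 (2 * PI).
Proof.
  unfold LF. f_equal. apply RInt_ext. intros x _. do 2 f_equal.
  simpl. rewrite Derive_uhat. apply is_derive_unique, D_uhat1.
Qed.

Lemma LFt_eq K a c w b cp : LFt K a c w b cp =
  / (2 * PI) * RInt (fun x => (uhat1 K cp w b x + a ^ 2 * sin (a * x)) ^ 2
      + (uhat K cp w b x - uhat1 K c w b x) ^ 2) 0 (2 * PI).
Proof.
  unfold LFt. f_equal. apply RInt_ext. intros x _.
  rewrite !Derive_uhat. reflexivity.
Qed.

Lemma dbound_ext F G t0 B : (forall t, F t = G t) -> dbound G t0 B -> dbound F t0 B.
Proof.
  intros H [H1 H2]. split.
  - eapply ex_derive_ext; [|exact H1]. intros; symmetry; auto.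
  - rewrite (Derive_ext F G); auto.
Qed.

Lemma D_sq (g : R -> R) e t dg : is_derive g t dg ->
  is_derive (fun s => (g s + e) ^ 2) t (2 * (g t + e) * dg).
Proof.
  intros H. auto_derive. eexists; eauto. assert (E : Derive (fun x : R => g x) t = dg) by (apply is_derive_unique; exact H). rewrite E. ring.
Qed.

Lemma D_sq2 (g1 g2 g3 : R -> R) e t d1 d2 d3 :
  is_derive g1 t d1 -> is_derive g2 t d2 -> is_derive g3 t d3 ->
  is_derive (fun s => (g1 s + e) ^ 2 + (g2 s - g3 s) ^ 2) t
    (2 * (g1 t + e) * d1 + 2 * (g2 t - g3 t) * (d2 - d3)).
Proof.
  intros H1 H2 H3. auto_derive.
  - repeat split; eexists; eauto.
  - assert (E1 : Derive (fun x : R => g1 x) t = d1) by (apply is_derive_unique; exact H1).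
    assert (E2 : Derive (fun x : R => g2 x) t = d2) by (apply is_derive_unique; exact H2).
    assert (E3 : Derive (fun x : R => g3 x) t = d3) by (apply is_derive_unique; exact H3).
    rewrite E1, E2, E3. ring.
Qed.

Lemma is_derive_vsum_upd K k (F : nat -> R -> R) t D : (k < K)%nat ->
  (forall l, is_derive (F l) t (if Nat.eqb l k then D else 0)) ->
  is_derive (fun s => vsum K (fun l => F l s)) t D.
Proof.
  intros Hk H. rewrite <- (vsum_delta K k D Hk).
  apply is_derive_vsum. exact H.
Qed.

Lemma is_derive_cst (e t : R) : is_derive (fun _ => e) t 0.
Proof. apply is_derive_Reals, derivable_pt_lim_const. Qed.

Lemma b_tanh z : Rabs (tanh z) <= 1.
Proof. apply tanh_bound. Qed.
Lemma b_s1 z : Rabs (s1 (tanh z)) <= 1.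
Proof. pose proof (tanh_bound z) as H. apply Rabs_le_between in H.
  unfold s1. apply Rabs_le. split; nra. Qed.
Lemma b_s2 z : Rabs (s2 (tanh z)) <= 2.
Proof. pose proof (tanh_bound z) as H. apply Rabs_le_between in H.
  unfold s2. set (y := tanh z) in *. destruct H.
  assert (0 <= 1 - y^2) by nra. assert (1 - y^2 <= 1) by nra.
  assert (0 <= y^2 <= 1) by nra.
  apply Rabs_le. split; nra. Qed.
Lemma b_s3 z : Rabs (s3 (tanh z)) <= 4.
Proof. pose proof (tanh_bound z) as H. apply Rabs_le_between in H.
  unfold s3. set (y := tanh z) in *. destruct H.
  assert (0 <= 1 - y^2) by nra. assert (1 - y^2 <= 1) by nra.
  assert (0 <= y^2 <= 1) by nra.
  apply Rabs_le. split; nra. Qed.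

Lemma vsum_scal K r f : vsum K (fun l => r * f l) = r * vsum K f.
Proof. unfold vsum. induction (seq 0 K); simpl; [ring|]. rewrite IHl. ring. Qed.

Lemma abs_mul_le a b A B : Rabs a <= A -> Rabs b <= B -> Rabs (a * b) <= A * B.
Proof. intros H1 H2. rewrite Rabs_mult. apply Rmult_le_compat; auto using Rabs_pos. Qed.

Lemma abs_sq a : Rabs (a ^ 2) <= a ^ 2.
Proof. rewrite Rabs_right by (apply Rle_ge, pow2_ge_0). lra. Qed.

Lemma b_uhat2 K c w b x : Rabs (uhat2 K c w b x) <= 2 * vsum K (fun l => Rabs (c l) * w l ^ 2).
Proof.
  unfold uhat2. rewrite <- vsum_scal. apply vsum_abs_le. intros l.
  apply Rle_trans with (Rabs (c l) * w l ^ 2 * 2); [|lra].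
  apply abs_mul_le; [apply abs_mul_le; [lra|apply abs_sq]|apply b_s2].
Qed.

Lemma b_uhat1 K c w b x : Rabs (uhat1 K c w b x) <= vsum K (fun l => Rabs (c l) * Rabs (w l)).
Proof.
  unfold uhat1. apply vsum_abs_le. intros l.
  apply Rle_trans with (Rabs (c l) * Rabs (w l) * 1); [|lra].
  apply abs_mul_le; [apply abs_mul_le; lra|apply b_s1].
Qed.

Lemma b_uhat K c w b x : Rabs (uhat K c w b x) <= vsum K (fun l => Rabs (c l)).
Proof.
  unfold uhat. apply vsum_abs_le. intros l.
  apply Rle_trans with (Rabs (c l) * 1); [|lra].
  apply abs_mul_le; [lra|apply b_tanh].
Qed.

Lemma b_asin a x : Rabs (a ^ 2 * sin (a * x)) <= a ^ 2.
Proof.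
  rewrite Rabs_mult, (Rabs_right (a^2)) by (apply Rle_ge, pow2_ge_0).
  pose proof (SIN_bound (a*x)). pose proof (pow2_ge_0 a).
  assert (Rabs (sin (a*x)) <= 1) by (apply Rabs_le; lra).
  rewrite <- (Rmult_1_r (a^2)) at 2. apply Rmult_le_compat_l; lra.
Qed.

Lemma abs_x x : 0 <= x <= 2 * PI -> Rabs x <= 8.
Proof. intros H. pose proof PI_4. rewrite Rabs_right; lra. Qed.

Lemma S_nonneg K a c w : 0 <= Sconst K a c w.
Proof.
  unfold Sconst. pose proof (pow2_ge_0 a).
  assert (0 <= vsum K (fun l => Rabs (c l) * w l ^ 2)).
  { apply vsum_nonneg. intros l. apply Rmult_le_pos. apply Rabs_pos. apply pow2_ge_0. }
  lra.
Qed.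

Lemma bG K a c w b x : Rabs (uhat2 K c w b x + a ^ 2 * sin (a * x)) <= 2 * Sconst K a c w.
Proof.
  eapply Rle_trans; [apply Rabs_triang|].
  pose proof (b_uhat2 K c w b x). pose proof (b_asin a x). pose proof (pow2_ge_0 a).
  unfold Sconst. lra.
Qed.

Lemma abs2 : Rabs 2 <= 2.
Proof. rewrite Rabs_right; lra. Qed.

Lemma case1 K a c w b k : (k < K)%nat ->
  dbound (fun t => LF K a (upd c k t) w b) (c k) (8 * Sconst K a c w * w k ^ 2).
Proof.
  intros Hk.
  eapply dbound_ext. { intro t. apply LF_eq. }
  apply (main_param (fun t x => (uhat2 K (upd c k t) w b x + a^2 * sin (a*x))^2)
    (fun t x => 2 * (uhat2 K (upd c k t) w b x + a^2*sin(a*x)) * (w k ^2 * s2 (tanh (w k * x + b k))))).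
  - intros t x. apply (D_sq (fun s => uhat2 K (upd c k s) w b x)). unfold uhat2. apply (is_derive_vsum_upd K k); auto.
    intros l. unfold upd. destruct (Nat.eqb_spec l k); [subst; ad|ad].
  - intros t x. unfold uhat2, s2. c2d.
  - intros t x. unfold uhat2, s2. c2d.
  - intros x Hx. rewrite upd_same.
    apply Rle_trans with (2 * (2 * Sconst K a c w) * (w k ^ 2 * 2)); [|right; ring].
    apply abs_mul_le; [apply abs_mul_le; [apply abs2|apply bG]|].
    apply abs_mul_le; [apply abs_sq|apply b_s2].
Qed.

Lemma case2 K a c w b k : (k < K)%nat ->
  dbound (fun t => LF K a c (upd w k t) b) (w k)
    (128 * Sconst K a c w * Rabs (c k) * Rabs (w k) * (Rabs (w k) + 1)).
Proof.
  intros Hk.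
  eapply dbound_ext. { intro t. apply LF_eq. }
  apply (main_param (fun t x => (uhat2 K c (upd w k t) b x + a^2 * sin (a*x))^2)
    (fun t x => 2 * (uhat2 K c (upd w k t) b x + a^2*sin(a*x)) *
       (c k * (2 * t * s2 (tanh (t * x + b k)) + t ^ 2 * x * s3 (tanh (t * x + b k)))))).
  - intros t x. apply (D_sq (fun s => uhat2 K c (upd w k s) b x)). unfold uhat2.
    apply (is_derive_vsum_upd K k); auto.
    intros l. unfold upd. destruct (Nat.eqb_spec l k); [subst; ad|ad].
  - intros t x. unfold uhat2, s2, s3. c2d.
  - intros t x. unfold uhat2, s2. c2d.
  - intros x Hx. rewrite upd_same. pose proof (abs_x x Hx) as Hx8.
    pose proof (S_nonneg K a c w) as HS.
    apply Rle_trans with (2 * (2 * Sconst K a c w) *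
        (Rabs (c k) * (2 * Rabs (w k) * 2 + w k ^ 2 * 8 * 4))).
    + apply abs_mul_le; [apply abs_mul_le; [apply abs2|apply bG]|].
      apply abs_mul_le; [lra|]. eapply Rle_trans; [apply Rabs_triang|].
      apply Rplus_le_compat.
      * apply abs_mul_le; [apply abs_mul_le; [apply abs2|lra]|apply b_s2].
      * apply abs_mul_le; [apply abs_mul_le; [apply abs_sq|exact Hx8]|apply b_s3].
    + rewrite <- (pow2_abs (w k)).
      pose proof (Rabs_pos (w k)). pose proof (Rabs_pos (c k)).
      assert (H1 : Rabs (c k) * (2 * Rabs (w k) * 2 + Rabs (w k) ^ 2 * 8 * 4)
                   <= 32 * (Rabs (c k) * Rabs (w k) * (Rabs (w k) + 1))).
      { assert (0 <= Rabs (c k) * Rabs (w k)) by nra. nra. }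
      assert (0 <= Sconst K a c w) by exact HS. nra.
Qed.

Lemma case3 K a c w b k : (k < K)%nat ->
  dbound (fun t => LF K a c w (upd b k t)) (b k)
    (16 * Sconst K a c w * Rabs (c k) * w k ^ 2).
Proof.
  intros Hk.
  eapply dbound_ext. { intro t. apply LF_eq. }
  apply (main_param (fun t x => (uhat2 K c w (upd b k t) x + a^2 * sin (a*x))^2)
    (fun t x => 2 * (uhat2 K c w (upd b k t) x + a^2*sin(a*x)) *
       (c k * w k ^ 2 * s3 (tanh (w k * x + t))))).
  - intros t x. apply (D_sq (fun s => uhat2 K c w (upd b k s) x)). unfold uhat2.
    apply (is_derive_vsum_upd K k); auto.
    intros l. unfold upd. destruct (Nat.eqb_spec l k); [subst; ad|ad].
  - intros t x. unfold uhat2, s2, s3. c2d.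
  - intros t x. unfold uhat2, s2. c2d.
  - intros x Hx. rewrite upd_same.
    apply Rle_trans with (2 * (2 * Sconst K a c w) * (Rabs (c k) * w k ^ 2 * 4)); [|right; ring].
    apply abs_mul_le; [apply abs_mul_le; [apply abs2|apply bG]|].
    apply abs_mul_le; [apply abs_mul_le; [lra|apply abs_sq]|apply b_s3].
Qed.

Lemma T_parts K a c w cp : 0 <= vsum K (fun l => Rabs (cp l)) /\
  0 <= vsum K (fun l => Rmax (Rabs (c l)) (Rabs (cp l)) * Rabs (w l)) /\ 0 <= a ^ 2.
Proof.
  split; [|split].
  - apply vsum_nonneg. intros; apply Rabs_pos.
  - apply vsum_nonneg. intros; apply Rmult_le_pos; [|apply Rabs_pos].
    eapply Rle_trans; [apply Rabs_pos|apply Rmax_l].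
  - apply pow2_ge_0.
Qed.

Lemma T_nonneg K a c w cp : 0 <= Tconst K a c w cp.
Proof. unfold Tconst. pose proof (T_parts K a c w cp). lra. Qed.

Lemma bP1 K a c w b cp x : Rabs (uhat1 K cp w b x + a ^ 2 * sin (a * x)) <= Tconst K a c w cp.
Proof.
  eapply Rle_trans; [apply Rabs_triang|].
  pose proof (b_uhat1 K cp w b x). pose proof (b_asin a x). pose proof (T_parts K a c w cp).
  assert (vsum K (fun l => Rabs (cp l) * Rabs (w l)) <=
          vsum K (fun l => Rmax (Rabs (c l)) (Rabs (cp l)) * Rabs (w l))).
  { apply vsum_le. intros l. apply Rmult_le_compat_r; [apply Rabs_pos|apply Rmax_r]. }
  unfold Tconst. lra.
Qed.

Lemma bP2 K a c w b cp x : Rabs (uhat K cp w b x - uhat1 K c w b x) <= Tconst K a c w cp.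
Proof.
  unfold Rminus. eapply Rle_trans; [apply Rabs_triang|]. rewrite Rabs_Ropp.
  pose proof (b_uhat1 K c w b x). pose proof (b_uhat K cp w b x). pose proof (T_parts K a c w cp).
  assert (vsum K (fun l => Rabs (c l) * Rabs (w l)) <=
          vsum K (fun l => Rmax (Rabs (c l)) (Rabs (cp l)) * Rabs (w l))).
  { apply vsum_le. intros l. apply Rmult_le_compat_r; [apply Rabs_pos|apply Rmax_l]. }
  unfold Tconst. lra.
Qed.

Lemma bform A B d1 d2 d3 TT D1 D23 : Rabs A <= TT -> Rabs B <= TT -> Rabs d1 <= D1 ->
  Rabs (d2 - d3) <= D23 -> Rabs (2 * A * d1 + 2 * B * (d2 - d3)) <= 2 * TT * (D1 + D23).
Proof.
  intros H1 H2 H3 H4. eapply Rle_trans; [apply Rabs_triang|].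
  replace (2 * TT * (D1 + D23)) with (2 * TT * D1 + 2 * TT * D23) by ring.
  apply Rplus_le_compat; repeat apply abs_mul_le; auto using abs2.
Qed.

Lemma M_l c cp : Rabs c <= Rmax (Rabs c) (Rabs cp).
Proof. apply Rmax_l. Qed.
Lemma M_r c cp : Rabs cp <= Rmax (Rabs c) (Rabs cp).
Proof. apply Rmax_r. Qed.

Lemma case4 K a c w b cp k : (k < K)%nat ->
  dbound (fun t => LFt K a (upd c k t) w b cp) (c k) (2 * Tconst K a c w cp * Rabs (w k)).
Proof.
  intros Hk.
  eapply dbound_ext. { intro t. apply LFt_eq. }
  apply (main_param (fun t x => (uhat1 K cp w b x + a ^ 2 * sin (a * x)) ^ 2
      + (uhat K cp w b x - uhat1 K (upd c k t) w b x) ^ 2)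
    (fun t x => 2 * (uhat1 K cp w b x + a ^ 2 * sin (a * x)) * 0
      + 2 * (uhat K cp w b x - uhat1 K (upd c k t) w b x) * (0 - w k * s1 (tanh (w k * x + b k))))).
  - intros t x. apply (D_sq2 (fun _ => uhat1 K cp w b x) (fun _ => uhat K cp w b x)
       (fun s => uhat1 K (upd c k s) w b x)); try apply is_derive_cst.
    unfold uhat1. apply (is_derive_vsum_upd K k); auto.
    intros l. unfold upd. destruct (Nat.eqb_spec l k); [subst; ad|ad].
  - intros t x. unfold uhat1, uhat, s1. c2d.
  - intros t x. unfold uhat1, uhat, s1. c2d.
  - intros x Hx. rewrite upd_same.
    apply Rle_trans with (2 * Tconst K a c w cp * (0 + Rabs (w k) * 1)); [|right; ring].
    apply bform; [apply bP1|apply bP2|rewrite Rabs_R0; lra|].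
    rewrite Rminus_0_l, Rabs_Ropp. apply abs_mul_le; [lra|apply b_s1].
Qed.

Lemma case7 K a c w b cp k : (k < K)%nat ->
  dbound (fun t => LFt K a c w b (upd cp k t)) (cp k) (2 * Tconst K a c w cp * (Rabs (w k) + 1)).
Proof.
  intros Hk.
  eapply dbound_ext. { intro t. apply LFt_eq. }
  apply (main_param (fun t x => (uhat1 K (upd cp k t) w b x + a ^ 2 * sin (a * x)) ^ 2
      + (uhat K (upd cp k t) w b x - uhat1 K c w b x) ^ 2)
    (fun t x => 2 * (uhat1 K (upd cp k t) w b x + a ^ 2 * sin (a * x)) * (w k * s1 (tanh (w k * x + b k)))
      + 2 * (uhat K (upd cp k t) w b x - uhat1 K c w b x) * (tanh (w k * x + b k) - 0))).
  - intros t x. apply (D_sq2 (fun s => uhat1 K (upd cp k s) w b x) (fun s => uhat K (upd cp k s) w b x)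
       (fun _ => uhat1 K c w b x)); try apply is_derive_cst.
    + unfold uhat1. apply (is_derive_vsum_upd K k); auto.
      intros l. unfold upd. destruct (Nat.eqb_spec l k); [subst; ad|ad].
    + unfold uhat. apply (is_derive_vsum_upd K k); auto.
      intros l. unfold upd. destruct (Nat.eqb_spec l k); [subst; ad|ad].
  - intros t x. unfold uhat1, uhat, s1. c2d.
  - intros t x. unfold uhat1, uhat, s1. c2d.
  - intros x Hx. rewrite upd_same.
    apply Rle_trans with (2 * Tconst K a c w cp * (Rabs (w k) * 1 + 1)); [|right; ring].
    apply bform; [apply bP1|apply bP2| |].
    + apply abs_mul_le; [lra|apply b_s1].
    + rewrite Rminus_0_r. apply b_tanh.
Qed.

Lemma case5 K a c w b cp k : (k < K)%nat ->
  let M := Rmax (Rabs (c k)) (Rabs (cp k)) in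
  dbound (fun t => LFt K a c (upd w k t) b cp) (w k)
    (84 * Tconst K a c w cp * M * Rmax (Rabs (w k)) 1).
Proof.
  intros Hk M.
  eapply dbound_ext. { intro t. apply LFt_eq. }
  apply (main_param (fun t x => (uhat1 K cp (upd w k t) b x + a ^ 2 * sin (a * x)) ^ 2
      + (uhat K cp (upd w k t) b x - uhat1 K c (upd w k t) b x) ^ 2)
    (fun t x => 2 * (uhat1 K cp (upd w k t) b x + a ^ 2 * sin (a * x)) *
         (cp k * (s1 (tanh (t * x + b k)) + t * x * s2 (tanh (t * x + b k))))
      + 2 * (uhat K cp (upd w k t) b x - uhat1 K c (upd w k t) b x) *
         (cp k * x * s1 (tanh (t * x + b k))
          - c k * (s1 (tanh (t * x + b k)) + t * x * s2 (tanh (t * x + b k)))))).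
  - intros t x. apply (D_sq2 (fun s => uhat1 K cp (upd w k s) b x) (fun s => uhat K cp (upd w k s) b x)
       (fun s => uhat1 K c (upd w k s) b x)).
    + unfold uhat1. apply (is_derive_vsum_upd K k); auto.
      intros l. unfold upd. destruct (Nat.eqb_spec l k); [subst; ad|ad].
    + unfold uhat. apply (is_derive_vsum_upd K k); auto.
      intros l. unfold upd. destruct (Nat.eqb_spec l k); [subst; ad|ad].
    + unfold uhat1. apply (is_derive_vsum_upd K k); auto.
      intros l. unfold upd. destruct (Nat.eqb_spec l k); [subst; ad|ad].
  - intros t x. unfold uhat1, uhat, s1, s2. c2d.
  - intros t x. unfold uhat1, uhat, s1. c2d.
  - intros x Hx. rewrite upd_same. pose proof (abs_x x Hx) as Hx8.
    pose proof (T_nonneg K a c w cp) as HT.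
    pose proof (M_l (c k) (cp k)) as Hc. pose proof (M_r (c k) (cp k)) as Hp. fold M in Hc, Hp.
    pose proof (Rabs_pos (w k)) as Hw.
    pose proof (Rmax_l (Rabs (w k)) 1). pose proof (Rmax_r (Rabs (w k)) 1).
    set (mx := Rmax (Rabs (w k)) 1) in *.
    assert (HM : 0 <= M) by (eapply Rle_trans; [apply Rabs_pos|exact Hc]).
    assert (HA : Rabs (s1 (tanh (w k * x + b k)) + w k * x * s2 (tanh (w k * x + b k))) <= 17 * mx).
    { eapply Rle_trans; [apply Rabs_triang|].
      pose proof (b_s1 (w k * x + b k)).
      assert (Rabs (w k * x * s2 (tanh (w k * x + b k))) <= Rabs (w k) * 8 * 2).
      { apply abs_mul_le; [apply abs_mul_le; lra|apply b_s2]. }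
      lra. }
    apply Rle_trans with (2 * Tconst K a c w cp * (M * (17 * mx) + (M * 8 * 1 + M * (17 * mx)))).
    + apply bform; [apply bP1|apply bP2| |].
      * apply abs_mul_le; assumption.
      * unfold Rminus. eapply Rle_trans; [apply Rabs_triang|]. rewrite Rabs_Ropp.
        apply Rplus_le_compat.
        -- apply abs_mul_le; [apply abs_mul_le; assumption|apply b_s1].
        -- apply abs_mul_le; assumption.
    + assert (0 <= M * mx) by nra. assert (M <= M * mx) by nra.
      assert (0 <= Tconst K a c w cp * (M * mx)) by nra. nra.
Qed.

Lemma case6 K a c w b cp k : (k < K)%nat ->
  let M := Rmax (Rabs (c k)) (Rabs (cp k)) in
  dbound (fun t => LFt K a c w (upd b k t) cp) (b k)
    (10 * Tconst K a c w cp * M * Rmax (Rabs (w k)) 1).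
Proof.
  intros Hk M.
  eapply dbound_ext. { intro t. apply LFt_eq. }
  apply (main_param (fun t x => (uhat1 K cp w (upd b k t) x + a ^ 2 * sin (a * x)) ^ 2
      + (uhat K cp w (upd b k t) x - uhat1 K c w (upd b k t) x) ^ 2)
    (fun t x => 2 * (uhat1 K cp w (upd b k t) x + a ^ 2 * sin (a * x)) *
         (cp k * w k * s2 (tanh (w k * x + t)))
      + 2 * (uhat K cp w (upd b k t) x - uhat1 K c w (upd b k t) x) *
         (cp k * s1 (tanh (w k * x + t)) - c k * w k * s2 (tanh (w k * x + t))))).
  - intros t x. apply (D_sq2 (fun s => uhat1 K cp w (upd b k s) x) (fun s => uhat K cp w (upd b k s) x)
       (fun s => uhat1 K c w (upd b k s) x)).
    + unfold uhat1. apply (is_derive_vsum_upd K k); auto.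
      intros l. unfold upd. destruct (Nat.eqb_spec l k); [subst; ad|ad].
    + unfold uhat. apply (is_derive_vsum_upd K k); auto.
      intros l. unfold upd. destruct (Nat.eqb_spec l k); [subst; ad|ad].
    + unfold uhat1. apply (is_derive_vsum_upd K k); auto.
      intros l. unfold upd. destruct (Nat.eqb_spec l k); [subst; ad|ad].
  - intros t x. unfold uhat1, uhat, s1, s2. c2d.
  - intros t x. unfold uhat1, uhat, s1. c2d.
  - intros x Hx. rewrite upd_same.
    pose proof (T_nonneg K a c w cp) as HT.
    pose proof (M_l (c k) (cp k)) as Hc. pose proof (M_r (c k) (cp k)) as Hp. fold M in Hc, Hp.
    pose proof (Rabs_pos (w k)) as Hw.
    pose proof (Rmax_l (Rabs (w k)) 1). pose proof (Rmax_r (Rabs (w k)) 1).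
    set (mx := Rmax (Rabs (w k)) 1) in *.
    assert (HM : 0 <= M) by (eapply Rle_trans; [apply Rabs_pos|exact Hc]).
    apply Rle_trans with (2 * Tconst K a c w cp * (M * Rabs (w k) * 2 + (M * 1 + M * Rabs (w k) * 2))).
    + apply bform; [apply bP1|apply bP2| |].
      * apply abs_mul_le; [apply abs_mul_le; lra|apply b_s2].
      * unfold Rminus. eapply Rle_trans; [apply Rabs_triang|]. rewrite Rabs_Ropp.
        apply Rplus_le_compat.
        -- apply abs_mul_le; [assumption|apply b_s1].
        -- apply abs_mul_le; [apply abs_mul_le; lra|apply b_s2].
    + assert (0 <= M * mx) by nra. assert (M <= M * mx) by nra.
      assert (M * Rabs (w k) <= M * mx) by nra.
      assert (0 <= Tconst K a c w cp * (M * mx)) by nra. nra.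
Qed.

Lemma dbound_mono F t B B' : B <= B' -> dbound F t B -> dbound F t B'.
Proof. intros H [H1 H2]. split; auto. lra. Qed.

Theorem theorem4p1 :
  exists C : R, 0 < C /\
  forall (K : nat) (a : R) (c w b cp : nat -> R) (k : nat),
    (1 <= K)%nat -> (k < K)%nat ->
    let S := Sconst K a c w in
    let T := Tconst K a c w cp in
    let M := Rmax (Rabs (c k)) (Rabs (cp k)) in
    dbound (fun t => LF K a (upd c k t) w b) (c k) (C * S * w k ^ 2) /\
    dbound (fun t => LF K a c (upd w k t) b) (w k)
           (C * S * Rabs (c k) * Rabs (w k) * (Rabs (w k) + 1)) /\
    dbound (fun t => LF K a c w (upd b k t)) (b k) (C * S * Rabs (c k) * w k ^ 2) /\
    dbound (fun t => LFt K a (upd c k t) w b cp) (c k) (C * T * Rabs (w k)) /\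
    dbound (fun t => LFt K a c (upd w k t) b cp) (w k)
           (C * T * M * Rmax (Rabs (w k)) 1) /\
    dbound (fun t => LFt K a c w (upd b k t) cp) (b k)
           (C * T * M * Rmax (Rabs (w k)) 1) /\
    dbound (fun t => LFt K a c w b (upd cp k t)) (cp k)
           (C * T * Rmax (Rabs (w k)) 1).
Proof.
  exists 200. split; [lra|].
  intros K a c w b cp k HK Hk.
  pose proof (S_nonneg K a c w) as HS. pose proof (T_nonneg K a c w cp) as HT.
  pose proof (Rabs_pos (w k)) as Hw. pose proof (Rabs_pos (c k)) as Hc.
  pose proof (pow2_ge_0 (w k)) as Hw2.
  pose proof (Rmax_l (Rabs (w k)) 1). pose proof (Rmax_r (Rabs (w k)) 1).
  assert (HM : 0 <= Rmax (Rabs (c k)) (Rabs (cp k)))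
    by (eapply Rle_trans; [apply Rabs_pos|apply Rmax_l]).
  cbv zeta.
  set (S := Sconst K a c w) in *. set (T := Tconst K a c w cp) in *.
  set (M := Rmax (Rabs (c k)) (Rabs (cp k))) in *.
  set (mx := Rmax (Rabs (w k)) 1) in *.
  split; [|split; [|split; [|split; [|split; [|split]]]]].
  - eapply dbound_mono; [|apply case1; auto]; fold S T M mx.
    assert (0 <= S * w k ^ 2) by nra. nra.
  - eapply dbound_mono; [|apply case2; auto]; fold S T M mx.
    assert (0 <= S * Rabs (c k)) by nra.
    assert (0 <= S * Rabs (c k) * Rabs (w k)) by nra.
    assert (0 <= S * Rabs (c k) * Rabs (w k) * (Rabs (w k) + 1)) by nra. nra.
  - eapply dbound_mono; [|apply case3; auto]; fold S T M mx.
    assert (0 <= S * Rabs (c k)) by nra.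
    assert (0 <= S * Rabs (c k) * w k ^ 2) by nra. nra.
  - eapply dbound_mono; [|apply case4; auto]; fold S T M mx.
    assert (0 <= T * Rabs (w k)) by nra. nra.
  - eapply dbound_mono; [|pose proof (case5 K a c w b cp k Hk) as H5; cbv zeta in H5; exact H5]; fold S T M mx.
    assert (0 <= T * M) by nra. assert (0 <= T * M * mx) by nra. nra.
  - eapply dbound_mono; [|pose proof (case6 K a c w b cp k Hk) as H6; cbv zeta in H6; exact H6]; fold S T M mx.
    assert (0 <= T * M) by nra. assert (0 <= T * M * mx) by nra. nra.
  - eapply dbound_mono; [|apply case7; auto]; fold S T M mx.
    assert (0 <= T * mx) by nra. assert (T * Rabs (w k) <= T * mx) by nra.
    assert (T <= T * mx) by nra. nra.
Qed.
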